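(* Let $R$ be a commutative ring, $M$ a locally free $R$-module of rank 2, $N$ a locally free $R$-module of rank 1, and $q:M\to N$ a quadratic map (in the sense of Kneser) with corresponding element $f\in\mathrm{Sym}^2M^*\otimes N$. Then $q$ is primitive in the sense of Kneser if and only if the linear binary quadratic form $f$ is primitive.
   Context: A quadratic map $q:M\to N$ is a map of sets with $q(rm)=r^2q(m)$ for $r\in R$, $m\in M$, such that $B(x,y)=q(x+y)-q(x)-q(y)$ is $R$-bilinear. It is primitive (Kneser) if $q(M)$ generates $N$ as an $R$-module. The corresponding $f\in\mathrm{Sym}^2M^*\otimes N\cong\mathrm{Hom}_R(\mathrm{Sym}_2M,N)$ (where $\mathrm{Sym}_2M\subset M^{\otimes2}$ is the submodule of symmetric tensors) is the homomorphism determined, on each open where $M$ is free with basis $m_1,m_2$, by $m_i\otimes m_i\mapsto q(m_i)$ and $m_1\otimes m_2+m_2\otimes m_1\mapsto B(m_1,m_2)$; equivalently $q(m)$ is the value of $f$ on $m\otimes m$. A linear binary quadratic form $f\in\mathrm{Sym}^2V\otimes L$ ($V$ locally free of rank 2, $L$ locally free of rank 1) is primitive if on every open where $V$ has basis $x,y$ and $L$ has basis $z$, writing $f=ax^2z+bxyz+cy^2z$, the elements $a,b,c$ generate the unit ideal; here $V=M^*$, $L=N$. *)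

(* Defs.v *)
(* Locally free modules, localizations and primitivity are
   expressed by clearing denominators: everything about R_g, M_g, N_g is
   written as statements about elements of R, M, N and powers of g. *)
From HB Require Import structures.
From mathcomp Require Import all_boot all_order all_algebra.
Set Implicit Arguments. Unset Strict Implicit. Unset Printing Implicit Defensive.
Import GRing.Theory.
Local Open Scope ring_scope.

Section Defs.
Variable R : comPzRingType.

(* x = y in the localization V_g (V an R-module). *)
Definition eq_loc (V : lmodType R) (g : R) (x y : V) : Prop :=
  exists k : nat, g ^+ k *: (x - y) = 0.

(* The images e_0,...,e_{n-1} of elements of M form a basis of the
   R_g-module M_g (g : R), i.e. M is free with basis e on the open D(g). *)
Definition free_on (M : lmodType R) (g : R) (n : nat) (e : 'I_n -> M) : Prop :=
  (forall m : M, exists (k : nat) (r : 'I_n -> R),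
      g ^+ k *: m = \sum_(i < n) r i *: e i) /\
  (forall r : 'I_n -> R, \sum_(i < n) r i *: e i = 0 ->
      exists k : nat, forall i, g ^+ k * r i = 0).

Definition locally_free (M : lmodType R) (n : nat) : Prop :=
  exists (k : nat) (g c : 'I_k -> R) (e : 'I_k -> 'I_n -> M),
    \sum_(i < k) c i * g i = 1 /\ forall i, free_on (g i) (e i).

Definition polar (M N : lmodType R) (q : M -> N) (x y : M) : N :=
  q (x + y) - q x - q y.

Definition quadratic_map (M N : lmodType R) (q : M -> N) : Prop :=
  (forall (r : R) (m : M), q (r *: m) = r ^+ 2 *: q m) /\
  (forall x y z : M, polar q (x + y) z = polar q x z + polar q y z) /\
  (forall (r : R) (x y : M), polar q (r *: x) y = r *: polar q x y) /\
  (forall x y z : M, polar q x (y + z) = polar q x y + polar q x z) /\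
  (forall (r : R) (x y : M), polar q x (r *: y) = r *: polar q x y).

Definition kneser_primitive (M N : lmodType R) (q : M -> N) : Prop :=
  forall n : N, exists s : seq (R * M),
    n = \sum_(p <- s) p.1 *: q p.2.

(* On an open D(g) where M has basis e_0, e_1 (dual
   basis x, y of V = M^* ) and N has basis z, f = a x^2 z + b x y z + c y^2 z
   with a z = f(e0 (x) e0) = q e0, b z = f(e0 (x) e1 + e1 (x) e0) = B(e0,e1),
   c z = f(e1 (x) e1) = q e1 in N_g.  Writing the coefficients over the common
   denominator g^k (a/g^k, b/g^k, c/g^k in R_g), the condition "a, b, c
   generate the unit ideal of R_g" unfolds to: some power of g lies in the
   ideal of R generated by the numerators. *)
Definition form_primitive (M N : lmodType R) (q : M -> N) : Prop :=
  forall (g : R) (e : 'I_2 -> M) (z : 'I_1 -> N) (a b c : R) (k : nat),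
    free_on g e -> free_on g z ->
    eq_loc g (g ^+ k *: q (e ord0)) (a *: z ord0) ->
    eq_loc g (g ^+ k *: polar q (e ord0) (e ord_max)) (b *: z ord0) ->
    eq_loc g (g ^+ k *: q (e ord_max)) (c *: z ord0) ->
    exists (l : nat) (u v w : R), g ^+ l = u * a + v * b + w * c.

End Defs.

(* Main.v *)
Require Import Defs.
From HB Require Import structures.
From mathcomp Require Import all_boot all_order all_algebra.
From mathcomp Require Import ring.
Local Open Scope ring_scope.
Import GRing.Theory.

Section Helpers.
Variable R : comPzRingType.
Variables M N : lmodType R.
Variable q : M -> N.

Definition inS (x : N) := exists s : seq (R * M), x = \sum_(p <- s) p.1 *: q p.2.

Lemma inS0 : inS 0.
Proof. by exists [::]; rewrite big_nil. Qed.

Lemma inSD x y : inS x -> inS y -> inS (x + y).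
Proof. by move=> [s1 ->] [s2 ->]; exists (s1 ++ s2); rewrite big_cat. Qed.

Lemma inSZ r x : inS x -> inS (r *: x).
Proof.
move=> [s ->]; exists [seq (r * p.1, p.2) | p <- s].
by rewrite big_map scaler_sumr; apply: eq_bigr => p _; rewrite scalerA.
Qed.

Lemma inSq m : inS (q m).
Proof. by exists [:: (1, m)]; rewrite big_cons big_nil addr0 scale1r. Qed.

Lemma inSN x : inS x -> inS (- x).
Proof. by move=> h; rewrite -scaleN1r; apply: inSZ. Qed.

Lemma inSpolar x y : inS (polar q x y).
Proof. by rewrite /polar; apply: inSD; [apply: inSD|]; apply/inSN || apply: inSq; apply: inSq. Qed.

Lemma sum2 (V : nmodType) (F : 'I_2 -> V) : \sum_(i < 2) F i = F ord0 + F ord_max.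
Proof. by rewrite big_ord_recl big_ord1; congr (_ + F _); apply: val_inj. Qed.

Lemma q_lin2 : quadratic_map q -> forall s t x y,
  q (s *: x + t *: y) = s ^+ 2 *: q x + t ^+ 2 *: q y + (s * t) *: polar q x y.
Proof.
move=> [h1 [_ [h3 [_ h5]]]] s t x y.
have qadd a b : q (a + b) = q a + q b + polar q a b.
  rewrite /polar; set u := q (a + b); set v := q a; set w := q b.
  rewrite -[u - v - w]addrA -opprD addrC.
  by rewrite addNKr.
by rewrite qadd h3 h5 scalerA !h1.
Qed.

Lemma free_on_mul n (V : lmodType R) g h (e : 'I_n -> V) :
  free_on g e -> free_on (g * h) e.
Proof.
move=> [sp ind]; split.
  move=> m; have [k [r Hr]] := sp m; exists k, (fun i => h ^+ k * r i).
  rewrite exprMn mulrC -scalerA Hr scaler_sumr; apply: eq_bigr => i _.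
  by rewrite scalerA.
move=> r Hr; have [k Hk] := ind r Hr; exists k => i.
by rewrite exprMn [g ^+ k * _]mulrC -mulrA Hk mulr0.
Qed.

Lemma eq_locP (V : lmodType R) g (x y : V) : eq_loc g x y ->
  exists k1, forall j, (k1 <= j)%N -> g ^+ j *: x = g ^+ j *: y.
Proof.
move=> [k1 H]; exists k1 => j hj.
rewrite -(subnK hj) exprD -!scalerA; congr (_ *: _).
by apply/eqP; rewrite -subr_eq0 -scalerBr H.
Qed.


Arguments eq_locP {V g x y}.
Arguments free_on_mul {n V g} h {e}.
Arguments sum2 {V}.

Lemma kneser_form : quadratic_map q -> kneser_primitive q -> form_primitive q.
Proof.
move=> hq hK g e z a b c k [spE _] [_ indZ] E0 E1 E2.
have [K0 H0] := eq_locP E0; have [K1 H1] := eq_locP E1; have [K2 H2] := eq_locP E2.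
set K := (K0 + K1 + K2)%N.
have A0 := H0 K (leq_trans (leq_addr K1 K0) (leq_addr K2 _)).
have A1 := H1 K (leq_trans (leq_addl K0 K1) (leq_addr K2 _)).
have A2 := H2 K (leq_addl _ K2).
rewrite !scalerA in A0 A1 A2.
pose Id (x : R) := exists u v w, x = u * a + v * b + w * c.
have step : forall m, exists E x, Id x /\ g ^+ E *: q m = x *: z ord0.
  move=> m; have [j [r Hr]] := spE m.
  rewrite sum2 in Hr.
  exists (K + k + j * 2)%N,
    (g ^+ K * (r ord0 ^+ 2 * a + r ord0 * r ord_max * b + r ord_max ^+ 2 * c)).
  split.
    exists (g ^+ K * r ord0 ^+ 2), (g ^+ K * (r ord0 * r ord_max)),
           (g ^+ K * r ord_max ^+ 2); ring.
  have := congr1 (fun v => g ^+ (K + k) *: q v) Hr.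
  rewrite /= (proj1 hq) q_lin2 // scalerA -exprM -exprD => ->.
  set P := polar q _ _ in A1 *.
  rewrite scalerDr scalerDr !scalerA.
  rewrite [g ^+ (K + k) * r ord0 ^+ 2]mulrC [g ^+ (K + k) * r ord_max ^+ 2]mulrC.
  rewrite [g ^+ (K + k) * (_ * _)]mulrC exprD.
  have B0 r' : (r' * (g ^+ K * g ^+ k)) *: q (e ord0) = (r' * (g ^+ K * a)) *: z ord0.
    by rewrite -scalerA A0 scalerA.
  have B1 r' : (r' * (g ^+ K * g ^+ k)) *: P = (r' * (g ^+ K * b)) *: z ord0.
    by rewrite -scalerA A1 scalerA.
  have B2 r' : (r' * (g ^+ K * g ^+ k)) *: q (e ord_max) = (r' * (g ^+ K * c)) *: z ord0.
    by rewrite -scalerA A2 scalerA.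
  rewrite B0 B1 B2 -!scalerDl; congr (_ *: _); ring.
have [s Hs] := hK (z ord0).
have : exists E x, Id x /\ g ^+ E *: z ord0 = x *: z ord0.
  rewrite {1}Hs; elim: s {Hs} => [|[r m] s [E [x [[u [v [w ->]]] IH]]]].
    exists 0%N, 0; split; first by exists 0, 0, 0; ring.
    by rewrite big_nil scaler0 scale0r.
  have [E' [x' [[u' [v' [w' ->]]] H']]] := step m.
  exists (E + E')%N, (r * g ^+ E * (u' * a + v' * b + w' * c) +
                      g ^+ E' * (u * a + v * b + w * c)).
  split.
    exists (r * g ^+ E * u' + g ^+ E' * u), (r * g ^+ E * v' + g ^+ E' * v),
           (r * g ^+ E * w' + g ^+ E' * w); ring.
  rewrite big_cons /= scalerDr exprD scalerA mulrC -scalerA [in RHS]scalerDl.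
  rewrite [g ^+ E *: (g ^+ E' *: _)]scalerA [g ^+ E * g ^+ E']mulrC -[(g ^+ E' * g ^+ E) *: _]scalerA IH scalerA.
  have -> : (r * (g ^+ E' * g ^+ E)) *: q m = (r * g ^+ E) *: (g ^+ E' *: q m).
    by rewrite scalerA -mulrA [g ^+ E * _]mulrC.
  by rewrite H' scalerA.
move=> [E [x [[u [v [w Hx]]] HE]]].
have /(indZ (fun _ => g ^+ E - x)) [k2 Hk2] : \sum_(i < 1) (g ^+ E - x) *: z i = 0.
  by rewrite big_ord1 scalerBl HE subrr.
exists (k2 + E)%N, (g ^+ k2 * u), (g ^+ k2 * v), (g ^+ k2 * w).
have := Hk2 ord0; rewrite mulrBr exprD => /eqP; rewrite subr_eq0 => /eqP ->.
rewrite Hx; ring.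
Qed.


Lemma form_core f (e : 'I_2 -> M) (z : 'I_1 -> N) n :
  quadratic_map q -> form_primitive q -> free_on f e -> free_on f z ->
  exists m, inS (f ^+ m *: n).
Proof.
move=> hq hF fe fz; have [spZ _] := fz.
have [k1 [r1 H1]] := spZ (q (e ord0)).
have [k2 [r2 H2]] := spZ (polar q (e ord0) (e ord_max)).
have [k3 [r3 H3]] := spZ (q (e ord_max)).
rewrite big_ord1 in H1; rewrite big_ord1 in H2; rewrite big_ord1 in H3.
have G0 : f ^+ (k1 + k2 + k3) *: q (e ord0) = (f ^+ (k2 + k3) * r1 ord0) *: z ord0.
  by rewrite -scalerA -H1 scalerA -exprD [in RHS]addnC addnA.
have G1 : f ^+ (k1 + k2 + k3) *: polar q (e ord0) (e ord_max)
          = (f ^+ (k1 + k3) * r2 ord0) *: z ord0.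
  by rewrite -scalerA -H2 scalerA -exprD addnAC.
have G2 : f ^+ (k1 + k2 + k3) *: q (e ord_max) = (f ^+ (k1 + k2) * r3 ord0) *: z ord0.
  by rewrite -scalerA -H3 scalerA -exprD.
move: (f ^+ (k2 + k3) * r1 ord0) (f ^+ (k1 + k3) * r2 ord0)
      (f ^+ (k1 + k2) * r3 ord0) G0 G1 G2 => a b c G0 G1 G2.
have [l [u [v [w Hl]]]] := hF f e z a b c (k1 + k2 + k3)%N fe fz
  (ex_intro _ 0%N (etrans (congr1 _ (etrans (congr1 (fun t => t - _) G0) (subrr _))) (scaler0 _ _)))
  (ex_intro _ 0%N (etrans (congr1 _ (etrans (congr1 (fun t => t - _) G1) (subrr _))) (scaler0 _ _)))
  (ex_intro _ 0%N (etrans (congr1 _ (etrans (congr1 (fun t => t - _) G2) (subrr _))) (scaler0 _ _))).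
have [k' [r Hr]] := spZ n; rewrite big_ord1 in Hr.
exists (k' + l)%N.
rewrite exprD mulrC -scalerA Hr scalerA mulrC -scalerA Hl !scalerDl -!scalerA -G0 -G1 -G2.
apply: inSZ; apply: inSD; first apply: inSD.
- by apply: inSZ; apply: inSZ; apply: inSq.
- by apply: inSZ; apply: inSZ; apply: inSpolar.
- by apply: inSZ; apply: inSZ; apply: inSq.
Qed.

Lemma inSMn x k : inS x -> inS (x *+ k).
Proof.
move=> h; elim: k => [|k IH]; first by rewrite mulr0n; apply: inS0.
by rewrite mulrS; apply: inSD.
Qed.

Section Rad.
Variable n : N.
Definition rad (r : R) := exists m, inS (r ^+ m *: n).

Lemma radM x y : rad x -> rad (y * x).
Proof.
by move=> [m H]; exists m; rewrite exprMn -scalerA; apply: inSZ.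
Qed.

Lemma rad0 : rad 0.
Proof. by exists 1%N; rewrite expr1 scale0r; apply: inS0. Qed.

Lemma radD x y : rad x -> rad y -> rad (x + y).
Proof.
move=> [m1 H1] [m2 H2]; exists (m1 + m2)%N.
rewrite exprDn scaler_suml; apply: (big_ind inS); [exact: inS0|exact: inSD|].
move=> i _; rewrite -scalerMnl; apply: inSMn.
case: (leqP m2 i) => hi.
  rewrite -(subnK hi) exprD mulrA -scalerA; exact: inSZ.
have hj : (m1 <= m1 + m2 - i)%N.
  by rewrite -addnBA ?leq_addr // ltnW.
rewrite -(subnK hj) exprD mulrC mulrA -scalerA; exact: inSZ.
Qed.

Lemma radsum (I : Type) (s : seq I) (F : I -> R) :
  (forall i, rad (F i)) -> rad (\sum_(i <- s) F i).
Proof.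
move=> h; apply: (big_ind rad); [exact: rad0|exact: radD|by move=> i _].
Qed.

Lemma rad1 : rad 1 -> inS n.
Proof. by move=> [m H]; rewrite expr1n scale1r in H. Qed.
End Rad.

End Helpers.

Theorem proposition6p2 (R : comPzRingType) (M N : lmodType R) (q : M -> N) :
  locally_free M 2 -> locally_free N 1 -> quadratic_map q ->
  (kneser_primitive q <-> form_primitive q).
Proof.
move=> [kM [gM [cM [eM [sM fM]]]]] [kN [gN [cN [eN [sN fN]]]]] hq.
split; first exact: kneser_form.
move=> hF n; apply: (@rad1 _ _ _ q n).
rewrite -sM; apply: radsum => i; apply: radM.
rewrite -[gM i]mul1r -sN mulr_suml; apply: radsum => j.
rewrite -mulrA [gN j * _]mulrC; apply: radM.
rewrite /rad; apply: (@form_core _ _ _ q _ _ _ n hq hF (@free_on_mul _ _ _ _ (gN j) _ (fM i))).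
by rewrite mulrC; apply: free_on_mul.
Qed.
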